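(* Let $\mathcal{P}$ and $\mathcal{P}'$ be $n$-dimensional simplices in $\mathbb{R}^n$ that are facet-generic, and suppose that a set $I=\{(\mathbf{n}_j,A_j): j\in\{0,\dots,n\}\}$ is a facet-indicator set of both $\mathcal{P}$ and $\mathcal{P}'$. Then there exist a vector $\mathbf{v}\in\mathbb{R}^n$ and $\epsilon\in\{-1,1\}$ such that $\mathcal{P}'=\epsilon\mathcal{P}+\mathbf{v}$. That is, an $n$-dimensional simplex is uniquely determined by a facet-indicator set of it, up to translation and reflection in a point.
   Context: An $n$-dimensional convex polytope is facet-generic if it does not contain two parallel facets ($(n-1)$-dimensional faces lying in parallel hyperplanes). For a facet-generic convex polytope $\mathcal{Q}$ with $f$ facets, a set $I=\{(\mathbf{n}_j,A_j): j\in J\}$ with $|J|=f$ is a facet-indicator set of $\mathcal{Q}$ if the facets of $\mathcal{Q}$ can be labelled $F_j$, $j\in J$ (bijectively), such that $\mathbf{n}_j$ is a unit normal vector of $F_j$, pointing either outwards or inwards (the direction is not specified), and $A_j$ is the $(n-1)$-dimensional surface measure of $F_j$. *)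

(* Defs.v *)
From mathcomp Require Import all_boot all_order all_algebra all_fingroup reals.
Set Implicit Arguments. Unset Strict Implicit. Unset Printing Implicit Defensive.
Import Order.TTheory GRing.Theory Num.Theory.
Local Open Scope ring_scope.

Section Simplex.
Variables (R : realType) (n : nat).
Implicit Types (x y u w : 'rV[R]_n) (p : 'I_n.+1 -> 'rV[R]_n).

Definition dotp x y : R := \sum_(i < n) x 0 i * y 0 i.

Definition aff_indep p : Prop :=
  forall c : 'I_n.+1 -> R,
    \sum_(i < n.+1) c i = 0 -> \sum_(i < n.+1) c i *: p i = 0 ->
    forall i, c i = 0.

Definition conv_hull p (x : 'rV[R]_n) : Prop :=
  exists c : 'I_n.+1 -> R,
    [/\ forall i, 0 <= c i, \sum_(i < n.+1) c i = 1 &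
        x = \sum_(i < n.+1) c i *: p i].

(* Facet k of the simplex is the convex hull of the vertices p i, i != k.
   Its supporting hyperplane (affine hull) has direction space facet_dir p k:
   the vectors sum_{i != k} c_i p_i with sum_{i != k} c_i = 0. *)
Definition facet_dir p (k : 'I_n.+1) (w : 'rV[R]_n) : Prop :=
  exists c : 'I_n.+1 -> R,
    \sum_(i < n.+1 | i != k) c i = 0 /\
    w = \sum_(i < n.+1 | i != k) c i *: p i.

Definition parallel_facets p (k l : 'I_n.+1) : Prop :=
  forall w, facet_dir p k w <-> facet_dir p l w.

Definition facet_generic p : Prop :=
  forall k l : 'I_n.+1, k != l -> ~ parallel_facets p k l.

(* u is a unit normal vector of facet k (either orientation). *)
Definition unit_normal p (k : 'I_n.+1) u : Prop :=
  dotp u u = 1 /\ forall w, facet_dir p k w -> dotp u w = 0.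

(* (n-1)-dimensional surface measure of facet k: the (n-1)-simplex with
   vertices q_0, ..., q_{n-1} (the p i, i != k, in increasing order) has
   measure sqrt(det G) / (n-1)!, where G is the Gram matrix of the edge
   vectors q_a - q_0, a = 1 .. n-1. *)
Definition facet_vertices (k : 'I_n.+1) : seq 'I_n.+1 :=
  [seq i <- enum 'I_n.+1 | i != k].

Definition facet_edge p (k : 'I_n.+1) (a : nat) : 'rV[R]_n :=
  p (nth k (facet_vertices k) a.+1) - p (nth k (facet_vertices k) 0).

Definition facet_measure p (k : 'I_n.+1) : R :=
  Num.sqrt (\det (\matrix_(a < n.-1, b < n.-1)
                    dotp (facet_edge p k a) (facet_edge p k b)))
  / (n.-1)`!%:R.

(* {(N j, A j) : j in {0..n}} is a facet-indicator set of the simplex with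
   vertices p: the facets can be labelled bijectively by j so that N j is a
   unit normal of the facet labelled j and A j is its surface measure. *)
Definition facet_indicator p (N : 'I_n.+1 -> 'rV[R]_n) (A : 'I_n.+1 -> R)
  : Prop :=
  exists s : {perm 'I_n.+1},
    forall j, unit_normal p (s j) (N j) /\ A j = facet_measure p (s j).

End Simplex.

(* Main.v *)
Require Import Defs.
From mathcomp Require Import all_boot all_order all_algebra all_fingroup reals.
From mathcomp Require Import ring lra zify.
Set Implicit Arguments. Unset Strict Implicit. Unset Printing Implicit Defensive.
Import Order.TTheory GRing.Theory Num.Theory.
Local Open Scope ring_scope.

Section Aux.
Variable R : realType.

Lemma dotpC d (x y : 'rV[R]_d) : dotp x y = dotp y x.
Proof. by rewrite /dotp; apply: eq_bigr => i _; rewrite mulrC. Qed.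

Lemma dotpDr d (x y z : 'rV[R]_d) : dotp x (y + z) = dotp x y + dotp x z.
Proof. by rewrite /dotp -big_split; apply: eq_bigr => i _; rewrite mxE mulrDr. Qed.

Lemma dotpZr d (x y : 'rV[R]_d) a : dotp x (a *: y) = a * dotp x y.
Proof. by rewrite /dotp mulr_sumr; apply: eq_bigr => i _; rewrite mxE mulrCA. Qed.

Lemma dotpNr d (x y : 'rV[R]_d) : dotp x (- y) = - dotp x y.
Proof. by rewrite -scaleN1r dotpZr mulN1r. Qed.

Lemma dotpBr d (x y z : 'rV[R]_d) : dotp x (y - z) = dotp x y - dotp x z.
Proof. by rewrite dotpDr dotpNr. Qed.

Lemma dotp0r d (x : 'rV[R]_d) : dotp x 0 = 0.
Proof. by rewrite /dotp big1 // => i _; rewrite mxE mulr0. Qed.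

Lemma dotp_sumr d k (x : 'rV[R]_d) (F : 'I_k -> 'rV[R]_d) :
  dotp x (\sum_(i < k) F i) = \sum_(i < k) dotp x (F i).
Proof.
rewrite /dotp; under eq_bigr do rewrite summxE mulr_sumr.
by rewrite exchange_big.
Qed.

Definition ai k d (w : 'I_k -> 'rV[R]_d) := forall c : 'I_k -> R,
  \sum_i c i = 0 -> \sum_i c i *: w i = 0 -> forall i, c i = 0.

Lemma edges_indep k d (w : 'I_k.+1 -> 'rV[R]_d) : ai w ->
  forall u : 'I_k -> R, \sum_a u a *: (w (lift ord0 a) - w ord0) = 0 ->
  forall a, u a = 0.
Proof.
move=> Hw u Hu a.
pose c i := if unlift ord0 i is Some b then u b else - \sum_b u b.
have H0 : c ord0 = - \sum_b u b by rewrite /c unlift_none.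
have HS (b : 'I_k) : c (lift ord0 b) = u b by rewrite /c liftK.
suff Hc : forall i, c i = 0 by rewrite -HS Hc.
apply: Hw.
  rewrite big_ord_recl H0 (eq_bigr _ (fun i _ => HS i)).
  by rewrite addNr.
rewrite big_ord_recl H0 (eq_bigr _ (fun i _ => congr1 (fun x => x *: w (lift ord0 i)) (HS i))).
move: Hu; rewrite (eq_bigr _ (fun i _ => scalerBr _ _ _)) sumrB => /eqP; rewrite subr_eq0 => /eqP ->.
by rewrite -scaler_suml scaleNr addNr.
Qed.


Lemma span_edges m (P : 'I_m.+2 -> 'rV[R]_m.+1) : ai P ->
  forall x : 'rV[R]_m.+1, exists c : 'I_m.+1 -> R,
    x = \sum_i c i *: (P (lift ord0 i) - P ord0).
Proof.
move=> HP x.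
pose E := \matrix_(i < m.+1) (P (lift ord0 i) - P ord0).
have EU : E \in unitmx.
  rewrite unitmxE unitfE; apply/negP => /det0P [v vn0 vE].
  move: vE; rewrite mulmx_sum_row.
  under eq_bigr do rewrite rowK.
  move=> /(edges_indep HP) H0.
  move/eqP: vn0; apply; apply/rowP => j; rewrite mxE.
  exact: H0.
exists (fun i => (x *m invmx E) 0 i).
by rewrite -{1}(mulmxKV EU x) mulmx_sum_row; under eq_bigr do rewrite rowK.
Qed.

Lemma dotp_comb k d (y : 'rV[R]_d) (c : 'I_k -> R) (e : 'I_k -> 'rV[R]_d) :
  dotp y (\sum_i c i *: e i) = \sum_i c i * dotp y (e i).
Proof. by rewrite dotp_sumr; apply: eq_bigr => i _; rewrite dotpZr. Qed.

Lemma not_all_orth m (P : 'I_m.+2 -> 'rV[R]_m.+1) (y : 'rV[R]_m.+1) : ai P ->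
  dotp y y = 1 -> ~ (forall i, dotp y (P (lift ord0 i) - P ord0) = 0).
Proof.
move=> HP Hy Ho; have [c Hc] := span_edges HP y.
move: Hy; rewrite {2}Hc dotp_comb big1 => [|i _]; last by rewrite Ho mulr0.
by move/eqP; rewrite eq_sym oner_eq0.
Qed.

Lemma parallel m (P Q N : 'I_m.+2 -> 'rV[R]_m.+1) : ai P -> ai Q ->
  (forall j, dotp (N j) (N j) = 1) ->
  (forall j a b, a != j -> b != j -> dotp (N j) (P a - P b) = 0) ->
  (forall j a b, a != j -> b != j -> dotp (N j) (Q a - Q b) = 0) ->
  exists l : R, forall i, Q i - Q ord0 = l *: (P i - P ord0).
Proof.
move=> HP HQ HN oP oQ.
set e := fun i => P (lift ord0 i) - P ord0.
set e' := fun i => Q (lift ord0 i) - Q ord0.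
have oe (i j : 'I_m.+1) : i != j -> dotp (N (lift ord0 j)) (e i) = 0.
  move=> ij; apply: oP; first by rewrite (inj_eq lift_inj).
  by rewrite neq_lift.
have oe' (i j : 'I_m.+1) : i != j -> dotp (N (lift ord0 j)) (e' i) = 0.
  move=> ij; apply: oQ; first by rewrite (inj_eq lift_inj).
  by rewrite neq_lift.
have be (i : 'I_m.+1) : dotp (N ord0) (e i) = dotp (N ord0) (e ord0).
  apply/eqP; rewrite -subr_eq0 -dotpBr /e opprB addrA subrK.
  by apply/eqP/oP; rewrite eq_sym neq_lift.
have be' (i : 'I_m.+1) : dotp (N ord0) (e' i) = dotp (N ord0) (e' ord0).
  apply/eqP; rewrite -subr_eq0 -dotpBr /e' opprB addrA subrK.
  by apply/eqP/oQ; rewrite eq_sym neq_lift.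
have al (j : 'I_m.+1) : dotp (N (lift ord0 j)) (e j) != 0.
  apply/eqP => H0; apply: (not_all_orth HP (HN (lift ord0 j))) => i.
  by case: (eqVneq i j) => [->|ij]; [exact: H0| exact: oe].
have bn : dotp (N ord0) (e ord0) != 0.
  apply/eqP => H0; apply: (not_all_orth HP (HN ord0)) => i.
  by have := be i; rewrite H0.
exists (dotp (N ord0) (e' ord0) / dotp (N ord0) (e ord0)).
have key (i : 'I_m.+1) : e' i = (dotp (N ord0) (e' ord0) / dotp (N ord0) (e ord0)) *: e i.
  have [c Hc] := span_edges HP (e' i).
  have cj (j : 'I_m.+1) : j != i -> c j = 0.
    move=> ji; have := oe' i j; rewrite eq_sym ji => /(_ isT).
    rewrite Hc dotp_comb (bigD1 j) //= big1 => [|k kj]; last first.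
      by rewrite oe ?mulr0.
    by rewrite addr0 => /eqP; rewrite mulf_eq0 (negPf (al j)) orbF => /eqP.
  have Hc' : e' i = c i *: e i.
    by rewrite Hc (bigD1 i) //= big1 ?addr0 // => k ki; rewrite cj // scale0r.
  rewrite {1}Hc'; congr (_ *: _).
  have := be' i; rewrite Hc' dotpZr be => <-.
  by rewrite mulfK.
move=> x; case: (unliftP ord0 x) => [i ->|->]; first exact: key.
by rewrite !subrr scaler0.
Qed.


Definition gram k d (w : 'I_k.+1 -> 'rV[R]_d) : 'M[R]_k :=
  \matrix_(a, b) dotp (w (lift ord0 a) - w ord0) (w (lift ord0 b) - w ord0).
Definition edgemx k d (w : 'I_k.+1 -> 'rV[R]_d) : 'M[R]_(k, d) :=
  \matrix_(a < k) (w (lift ord0 a) - w ord0).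
Definition Fmx k (w : 'I_k.+1 -> 'rV[R]_k.+1) (N : 'rV[R]_k.+1) : 'M[R]_(1 + k, k.+1) :=
  col_mx N (edgemx w).

Lemma gram_F k (w : 'I_k.+1 -> 'rV[R]_k.+1) (N : 'rV[R]_k.+1) :
  (forall a, dotp N (w a - w ord0) = 0) -> dotp N N = 1 ->
  \det (gram w) = \det (Fmx w N) ^+ 2.
Proof.
move=> HNo HN.
have E1 : Fmx w N *m (Fmx w N)^T = block_mx 1 0 0 (gram w).
  rewrite /Fmx tr_col_mx mul_col_row; congr block_mx.
  - apply/matrixP => i j; rewrite (ord1 i) (ord1 j) !mxE -HN /dotp eqxx mulr1n.
    by apply: eq_bigr => l _; rewrite !mxE.
  - apply/matrixP => i j; rewrite (ord1 i) !mxE -[X in _ = X](HNo (lift ord0 j)) /dotp.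
    by apply: eq_bigr => l _; rewrite !mxE.
  - apply/matrixP => i j; rewrite (ord1 j) !mxE -[X in _ = X](HNo (lift ord0 i)) /dotp.
    by apply: eq_bigr => l _; rewrite !mxE mulrC.
  - apply/matrixP => i j; rewrite !mxE /dotp.
    by apply: eq_bigr => l _; rewrite !mxE.
have := congr1 determinant E1.
rewrite det_mulmx det_tr det_ublock det1 mul1r => <-.
by rewrite expr2.
Qed.


Definition Hmat k (w : 'I_k.+1 -> 'rV[R]_k.+1) (N : 'rV[R]_k.+1) : 'M[R]_(1 + k.+1) :=
  block_mx (0 : 'M_1) N (const_mx 1) (\matrix_(a < k.+1) w a).

Lemma H_F k (w : 'I_k.+1 -> 'rV[R]_k.+1) (N : 'rV[R]_k.+1) :
  \det (Hmat w N) ^+ 2 = \det (Fmx w N) ^+ 2.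
Proof.
set K := block_mx (1 : 'M_1) (- w ord0) 0 (1 : 'M_k.+1).
have dK : \det K = 1 by rewrite det_ublock !det1 mulr1.
have HK : Hmat w N *m K =
    block_mx 0 N (const_mx 1) (\matrix_(a < k.+1) w a - const_mx 1 *m w ord0).
  rewrite /Hmat mulmx_block !mulmx0 !mul0mx !mulmx1 !addr0 add0r mulmxN.
  by rewrite addrC.
have -> : \det (Hmat w N) = \det (Hmat w N *m K) by rewrite det_mulmx dK mulr1.
rewrite HK (expand_det_row _ (rshift 1 (ord0 : 'I_k.+1))).
rewrite big_split_ord /= big_ord1 big1 ?addr0; last first.
  move=> j _; rewrite block_mxEdr !mxE big_ord1 !mxE mul1r.
  by rewrite (ord1 (ord0 : 'I_1)) subrr mul0r.
rewrite block_mxEdl mxE mul1r /cofactor exprMn.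
have -> : ((-1) ^+ (rshift 1 (ord0 : 'I_k.+1) + lshift k.+1 (ord0 : 'I_1)) ^+ 2 : R) = 1.
  by rewrite sqrr_sign.
rewrite mul1r; congr (_ ^+ 2); congr determinant.
apply/matrixP => i j; rewrite !mxE.
have Lj : (lift (lshift k.+1 (ord0 : 'I_1)) j : nat) = j.+1 by rewrite /= /bump; lia.
have Li : (lift (rshift 1 (ord0 : 'I_k.+1)) i : nat) = if (i : nat) == 0%N then 0%N else i.+1.
  case: i => [[|i'] Hi]; rewrite /= /bump; lia.
case: splitP => [i1 Hi1 | i2 Hi2]; case: (splitP (i : 'I_(1 + k))) => [i3 Hi3 | i4 Hi4].
- rewrite (ord1 i1) (ord1 i3) mxE; case: splitP => [j1 Hj1|j2 Hj2].
    by move: Hj1; rewrite Lj (ord1 j1).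
  by congr (N 0 _); apply/val_inj; move: Hj2; rewrite Lj /= add1n => -[->].
- by move: Hi1; rewrite Li Hi4 (ord1 i1) /=.
- by move: Hi2; rewrite Li Hi3 (ord1 i3) /=.
- rewrite mxE; case: splitP => [j1 Hj1|j2 Hj2].
    by move: Hj1; rewrite Lj (ord1 j1).
  have ej : j2 = j by apply/val_inj; move: Hj2; rewrite Lj /= add1n => -[->].
  have ei : i2 = lift ord0 i4.
    by apply/val_inj; move: Hi2; rewrite Li Hi4 /= /bump leq0n !add1n => /eqP; rewrite eqSS => /eqP <-.
  rewrite ej ei !mxE big_ord1 !mxE mul1r (ord1 (ord0 : 'I_1)).
  by [].
Qed.


Lemma H_perm k (w : 'I_k.+1 -> 'rV[R]_k.+1) (N : 'rV[R]_k.+1) (s : 'S_k.+1) :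
  \det (Hmat (fun a => w (s a)) N) ^+ 2 = \det (Hmat w N) ^+ 2.
Proof.
have -> : Hmat (fun a => w (s a)) N =
    block_mx (1 : 'M_1) 0 0 (perm_mx s) *m Hmat w N.
  rewrite /Hmat mulmx_block !mul0mx !mul1mx !addr0 !add0r -!row_permE.
  congr block_mx; apply/matrixP => i j; rewrite !mxE //.
by rewrite det_mulmx det_ublock det1 mul1r det_perm exprMn sqrr_sign mul1r.
Qed.


Lemma fv_mem n (kk x : 'I_n.+1) : (x \in facet_vertices kk) = (x != kk).
Proof. by rewrite mem_filter mem_enum andbT. Qed.

Lemma fv_uniq n (kk : 'I_n.+1) : uniq (facet_vertices kk).
Proof. exact/filter_uniq/enum_uniq. Qed.

Lemma fv_size n (kk : 'I_n.+1) : size (facet_vertices kk) = n.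
Proof.
rewrite -(card_uniqP (fv_uniq kk)) (@eq_card _ _ (predC1 kk)) ?cardC1 ?card_ord //.
by move=> x; rewrite fv_mem inE.
Qed.

Lemma fv_sum (V : nmodType) n (kk : 'I_n.+1) (g : 'I_n.+1 -> V) :
  \sum_(a < n) g (nth kk (facet_vertices kk) a) = \sum_(x | x != kk) g x.
Proof.
transitivity (\sum_(x <- facet_vertices kk) g x); last first.
  by rewrite /facet_vertices big_filter big_enum_cond.
by rewrite (big_nth kk) fv_size big_mkord.
Qed.


Lemma sum_ind n (kk x : 'I_n.+1) (V : lmodType R) (F : 'I_n.+1 -> V) : x != kk ->
  \sum_(i | i != kk) (i == x)%:R *: F i = F x.
Proof.
move=> xk; rewrite (bigD1 x) //= eqxx scale1r big1 ?addr0 // => i /andP [_ ix].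
by rewrite (negPf ix) scale0r.
Qed.

Lemma normal_diff n (p : 'I_n.+1 -> 'rV[R]_n) kk u a b :
  unit_normal p kk u -> a != kk -> b != kk -> dotp u (p a - p b) = 0.
Proof.
move=> [_ Hu] ak bk; apply: Hu.
exists (fun i => (i == a)%:R - (i == b)%:R); split.
  rewrite sumrB.
  have := sum_ind (fun _ => (1 : R^o)) ak; have := sum_ind (fun _ => (1 : R^o)) bk.
  rewrite /=. under eq_bigr do rewrite [_ *: _]mulr1. move=> ->.
  under eq_bigr do rewrite [_ *: _]mulr1. move=> ->.
  by rewrite subrr.
under eq_bigr do rewrite scalerBl.
by rewrite sumrB sum_ind // sum_ind.
Qed.


Lemma FM k (p : 'I_k.+2 -> 'rV[R]_k.+1) kk : facet_measure p kk =
  Num.sqrt (\det (gram (fun a : 'I_k.+1 => p (nth kk (facet_vertices kk) a)))) / k`!%:R.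
Proof.
by rewrite /facet_measure /=; congr (Num.sqrt (\det _) / _).
Qed.

Lemma fv_ai k (p : 'I_k.+2 -> 'rV[R]_k.+1) kk : ai p ->
  ai (fun a : 'I_k.+1 => p (nth kk (facet_vertices kk) a)).
Proof.
move=> Hp c Hc1 Hc2 a.
set L := facet_vertices kk.
pose C x := if x == kk then 0 else c (inord (index x L)).
have HC (b : 'I_k.+1) : C (nth kk L b) = c b.
  have bL : (b < size L)%N by rewrite fv_size.
  have := mem_nth kk bL; rewrite fv_mem => /negPf.
  by rewrite /C => ->; rewrite index_uniq ?fv_uniq // inord_val.
have Hs (V : lmodType R) (F : 'I_k.+2 -> V) :
    \sum_x C x *: F x = \sum_b c b *: F (nth kk L b).
  rewrite (bigD1 kk) //= {1}/C eqxx scale0r add0r -fv_sum.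
  by apply: eq_bigr => b _; rewrite HC.
have HC0 : forall x, C x = 0.
  apply: Hp; last by rewrite Hs.
  have := Hs _ (fun _ => (1 : R^o)); rewrite /=.
  under eq_bigr do rewrite [_ *: _]mulr1. move=> ->.
  by under eq_bigr do rewrite [_ *: _]mulr1.
by rewrite -HC HC0.
Qed.

Lemma detF_neq0 k (w : 'I_k.+1 -> 'rV[R]_k.+1) (N : 'rV[R]_k.+1) : ai w ->
  dotp N N = 1 -> (forall a, dotp N (w a - w ord0) = 0) -> \det (Fmx w N) != 0.
Proof.
move=> Hw HN HNo; apply/negP => /det0P [v vn0].
rewrite /Fmx /edgemx -[v](@hsubmxK _ 1 1 k) mul_row_col [X in _ + X]mulmx_sum_row.
under eq_bigr do rewrite rowK.
set v0 := lsubmx v 0 0.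
have -> : lsubmx v *m N = v0 *: N.
  by apply/rowP => j; rewrite !mxE big_ord1.
move=> H0.
have v00 : v0 = 0.
  have := congr1 (dotp N) H0; rewrite dotpDr dotpZr HN mulr1 dotp_comb dotp0r.
  by rewrite big1 ?addr0 // => i _; rewrite HNo mulr0.
move: H0; rewrite v00 scale0r add0r => /(edges_indep Hw) Hr.
move/eqP: vn0; apply.
rewrite -[v](@hsubmxK _ 1 1 k).
have -> : lsubmx v = 0 by apply/rowP => j; rewrite (ord1 j) [RHS]mxE; exact: v00.
have -> : rsubmx v = 0 by apply/rowP => j; rewrite [RHS]mxE Hr.
by rewrite row_mx0.
Qed.

Lemma fm_pos k (p : 'I_k.+2 -> 'rV[R]_k.+1) kk u : ai p -> unit_normal p kk u ->
  0 < facet_measure p kk.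
Proof.
move=> Hp Hu; rewrite FM; apply: divr_gt0; last by rewrite ltr0n fact_gt0.
have Hw := fv_ai (kk:=kk) Hp.
set w := (fun a : 'I_k.+1 => _) in Hw *.
have HNo a : dotp u (w a - w ord0) = 0.
  apply: (normal_diff Hu); rewrite -fv_mem mem_nth // fv_size //.
rewrite sqrtr_gt0 (gram_F HNo Hu.1).
rewrite lt0r sqr_ge0 andbT sqrf_eq0.
exact: detF_neq0 Hw Hu.1 HNo.
Qed.


Lemma dotpZl d (x y : 'rV[R]_d) a : dotp (a *: x) y = a * dotp x y.
Proof. by rewrite dotpC dotpZr dotpC. Qed.

Lemma FM_scale k (q r : 'I_k.+2 -> 'rV[R]_k.+1) (l : R) v kk :
  (forall x, q x = l *: r x + v) ->
  facet_measure q kk = `|l| ^+ k * facet_measure r kk.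
Proof.
move=> Hq; rewrite !FM.
have D x y : q x - q y = l *: (r x - r y).
  by rewrite !Hq scalerBr opprD addrACA subrr addr0.
have -> : gram (fun a : 'I_k.+1 => q (nth kk (facet_vertices kk) a)) =
   (l ^+ 2) *: gram (fun a : 'I_k.+1 => r (nth kk (facet_vertices kk) a)).
  by apply/matrixP => a b; rewrite !mxE !D dotpZr dotpZl mulrA -expr2.
rewrite detZ sqrtrM; last by rewrite exprn_ge0 ?sqr_ge0.
rewrite -exprM mulnC exprM sqrtr_sqr normrX.
by rewrite mulrA.
Qed.


Lemma FM_perm k (p r : 'I_k.+2 -> 'rV[R]_k.+1) (sg : 'I_k.+2 -> 'I_k.+2) kk u :
  injective sg -> (forall x, r x = p (sg x)) -> unit_normal p (sg kk) u ->
  facet_measure r kk = facet_measure p (sg kk).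
Proof.
move=> si Hr Hu; rewrite !FM; congr (Num.sqrt _ / _).
set L := facet_vertices kk; set L' := facet_vertices (sg kk).
set w := fun a : 'I_k.+1 => p (nth (sg kk) L' a).
set w' := fun a : 'I_k.+1 => r (nth kk L a).
have inL (a : 'I_k.+1) : nth kk L a != kk by rewrite -fv_mem mem_nth ?fv_size.
have inL' (a : 'I_k.+1) : sg (nth kk L a) \in L' by rewrite fv_mem (inj_eq si) inL.
pose f (a : 'I_k.+1) : 'I_k.+1 := inord (index (sg (nth kk L a)) L').
have Hf a : nth (sg kk) L' (f a) = sg (nth kk L a).
  rewrite /f inordK; first exact: nth_index.
  by have := index_mem (sg (nth kk L a)) L'; rewrite inL' fv_size.
have fi : injective f.
  move=> a b fab; have := Hf a; rewrite fab Hf => /si /eqP; rewrite eq_sym.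
  by rewrite nth_uniq ?fv_size ?fv_uniq // => /eqP /val_inj.
pose s := perm fi.
have Hw' a : w' a = w (s a) by rewrite /w' /w permE Hf Hr.
have o' a : dotp u (w a - w ord0) = 0.
  by apply: (normal_diff Hu); rewrite -fv_mem mem_nth ?fv_size.
have o'' a : dotp u (w' a - w' ord0) = 0.
  by rewrite !Hw'; apply: (normal_diff Hu); rewrite -fv_mem mem_nth ?fv_size.
rewrite (gram_F o'' Hu.1) (gram_F o' Hu.1) -!H_F.
have -> : Hmat w' u = Hmat (fun a => w (s a)) u.
  by rewrite /Hmat; congr block_mx; apply/matrixP => i j; rewrite !mxE Hw'.
exact: H_perm.
Qed.


Lemma sum_comb n d (c : 'I_n -> R) (F : 'I_n -> 'rV[R]_d) l v :
  \sum_x c x *: (l *: F x + v) = l *: \sum_x c x *: F x + (\sum_x c x) *: v.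
Proof.
rewrite scaler_sumr scaler_suml -big_split; apply: eq_bigr => x _.
by rewrite scalerDr !scalerA mulrC.
Qed.

Lemma conv_affine n (p q : 'I_n.+1 -> 'rV[R]_n) (sg : {perm 'I_n.+1}) l v :
  (forall x, q x = l *: p (sg x) + v) ->
  forall y, conv_hull q y <-> exists z, conv_hull p z /\ y = l *: z + v.
Proof.
move=> Hq y; split.
  move=> [c [c0 c1 ->]].
  exists (\sum_x c x *: p (sg x)); split.
    exists (fun y => c ((sg^-1)%g y)); split.
    - by move=> i; apply: c0.
    - by rewrite (reindex_inj (@perm_inj _ sg)); under eq_bigr do rewrite permK.
    - by symmetry; rewrite (reindex_inj (@perm_inj _ sg)); under eq_bigr do rewrite permK.
  by under eq_bigr do rewrite Hq; rewrite sum_comb c1 scale1r.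
move=> [z [[d [d0 d1 ->]] ->]].
exists (fun x => d (sg x)); split.
- by move=> i; apply: d0.
- by rewrite -d1 (reindex_inj (@perm_inj _ sg) (P:=xpredT) (F:=d)).
- symmetry; under eq_bigr do rewrite Hq; rewrite sum_comb.
  have -> : \sum_x d (sg x) = 1 by rewrite -d1 (reindex_inj (@perm_inj _ sg) (P:=xpredT) (F:=d)).
  by rewrite (reindex_inj (@perm_inj _ sg) (P:=xpredT) (F:=fun x => d x *: p x)) scale1r.
Qed.

Lemma ai_perm n d (p : 'I_n -> 'rV[R]_d) (s : {perm 'I_n}) : ai p -> ai (fun i => p (s i)).
Proof.
move=> Hp c c1 c2 i.
have H := Hp (fun y => c ((s^-1)%g y)).
rewrite -(permK s i); apply: H.
  by rewrite (reindex_inj (@perm_inj _ s)); under eq_bigr do rewrite permK.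
by rewrite (reindex_inj (@perm_inj _ s)); under eq_bigr do rewrite permK.
Qed.


Lemma dim1_parallel (p : 'I_2 -> 'rV[R]_1) : parallel_facets p ord0 ord_max.
Proof.
have H kk w : facet_dir p kk w <-> w = 0.
  split.
    move=> [c [c0 ->]].
    move: c0; rewrite -(fv_sum kk c) big_ord1 => c0.
    by rewrite -(fv_sum kk (fun x => c x *: p x)) big_ord1 c0 scale0r.
  move=> ->; exists (fun _ => 0); split; rewrite big1 // => i _.
  by rewrite scale0r.
by move=> w; rewrite !H.
Qed.

End Aux.

Unset Implicit Arguments.

Theorem theorem2 (R : realType) (n : nat) (p q : 'I_n.+1 -> 'rV[R]_n)
  (N : 'I_n.+1 -> 'rV[R]_n) (A : 'I_n.+1 -> R) :
  aff_indep p -> aff_indep q ->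
  facet_generic p -> facet_generic q ->
  facet_indicator p N A -> facet_indicator q N A ->
  exists (v : 'rV[R]_n) (eps : R), (eps = 1 \/ eps = -1) /\
    forall x : 'rV[R]_n,
      conv_hull q x <-> exists y, conv_hull p y /\ x = eps *: y + v.
Proof.
case: n p q N A => [|[|m]] p q N A Hp Hq Gp Gq [s Hs] [t Ht].
- exists 0, 1; split; first by left.
  apply: (conv_affine (sg := 1%g)) => x.
  by rewrite perm1 scale1r addr0; apply/rowP => j; case: j.
- by exfalso; apply: (Gp ord0 ord_max isT); apply: dim1_parallel.
set P := fun i => p (s i); set Q := fun i => q (t i).
have HP : ai P by apply: ai_perm.
have HQ : ai Q by apply: ai_perm.
have HN j : dotp (N j) (N j) = 1 by case: (Hs j) => [[]].
have oP j a b : a != j -> b != j -> dotp (N j) (P a - P b) = 0.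
  by move=> aj bj; apply: (normal_diff (Hs j).1); rewrite (inj_eq perm_inj).
have oQ j a b : a != j -> b != j -> dotp (N j) (Q a - Q b) = 0.
  by move=> aj bj; apply: (normal_diff (Ht j).1); rewrite (inj_eq perm_inj).
have [l Hl] := parallel HP HQ HN oP oQ.
set sg := (t^-1 * s)%g.
set v := Q ord0 - l *: P ord0.
have Hqx x : q x = l *: p (sg x) + v.
  have := Hl ((t^-1)%g x); rewrite /Q /P permKV => /eqP; rewrite subr_eq => /eqP ->.
  by rewrite /v permM scalerBr /Q /P addrAC -addrA.
have Hsg : sg (t ord0) = s ord0 by rewrite /sg permM permK.
have Apos : 0 < A ord0.
  by rewrite (Hs ord0).2; apply: fm_pos Hp (Hs ord0).1.
have HA : A ord0 = `|l| ^+ m.+1 * A ord0.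
  rewrite {1}(Ht ord0).2 (FM_scale (r := fun x => p (sg x)) _ Hqx).
  rewrite (FM_perm (p := p) (sg := sg) (u := N ord0)) //; first by rewrite Hsg -(Hs ord0).2.
  - exact: perm_inj.
  - by rewrite Hsg; exact: (Hs ord0).1.
have l1 : `|l| = 1.
  apply/eqP; rewrite -(pexpr_eq1 (n := m.+1)) //.
  apply/eqP; apply: (mulIf (lt0r_neq0 Apos)); rewrite mul1r.
  by rewrite -HA.
exists v, l; split.
  by move/eqP: l1; rewrite eqr_norml ler01 andbT => /orP [/eqP ->|/eqP ->]; [left|right].
exact: conv_affine Hqx.
Qed.
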